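(* Let $n\ge2$, let $\mathcal{G}$ be one of $F_n$, $T_n$, $V_n$, and let $g\in\mathcal{G}$ be represented by the tree pair $(\mathrm{G}_{+},\sigma,\mathrm{G}_{-})$. Let $\ell_u(\mathrm{G}_{+})\mapsto\ell_v(\mathrm{G}_{-})$ be a branch of $g$, let $h\in F_n$ and let $h'=(h)_{[v]}$. Then $\mathcal{N}(gh')=\mathcal{N}(g)+\mathcal{N}(h)-1$.
   Context: $F_n,T_n,V_n$ are the Brown–Thompson groups of piecewise-linear maps of $[0,1]$ (resp. the circle, resp. right-continuous bijections of $[0,1]$) with finitely many $n$-adic breakpoints and slopes powers of $n$; elements are represented by pairs $(\mathrm{T}_+,\sigma,\mathrm{T}_-)$ of rooted finite $n$-ary trees with the same number of leaves and a bijection $\sigma$ between their leaves, and each element has a unique reduced such representative. $\mathcal{N}(g)$ is the number of leaves of each tree in the reduced tree pair of $g$. Nodes of the infinite rooted $n$-ary tree are identified with words over $\{0,\dots,n-1\}$ (the path from the root); a leaf of a finite tree corresponds to such a word, and the path from the root to leaf $\omega$ is denoted $\ell_\omega(\mathrm{T})$. A branch of $g$ is a correspondence $\ell_{\omega}(\mathrm{T}_+)\mapsto\ell_{\sigma(\omega)}(\mathrm{T}_-)$ between a leaf of the source tree and the leaf of the target tree it is mapped to. For $h\in F_n$ with tree pair $(\mathrm{H}_+,\mathrm{id},\mathrm{H}_-)$ and a word $v$, $(h)_{[v]}$ denotes the element whose tree pair is obtained from a tree pair $(\mathrm{T},\mathrm{id},\mathrm{T})$ having $v$ as a leaf by attaching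 $\mathrm{H}_+$ to the leaf $v$ of the source tree and $\mathrm{H}_-$ to the leaf $v$ of the target tree (so it acts as $h$ on the subinterval corresponding to $v$ and as the identity elsewhere). *)

(* Defs.v *)
(* Combinatorial model of the Brown--Thompson groups F_n, T_n, V_n
   via tree pairs and their (faithful) prefix-replacement action on infinite
   n-ary words (= points of the Cantor set {0,..,n-1}^N). *)
From mathcomp Require Import all_boot.
Set Implicit Arguments. Unset Strict Implicit. Unset Printing Implicit Defensive.

Inductive ntree (n : nat) : Type :=
| Leaf : ntree n
| Node : ('I_n -> ntree n) -> ntree n.
Arguments Leaf {n}.
Arguments Node {n}.

(* Nodes are words over {0,..,n-1} (path from the root).  The leaves of a tree,
   listed from left to right. *)
Fixpoint leaves (n : nat) (t : ntree n) : seq (seq 'I_n) :=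
  match t with
  | Leaf => [:: [::]]
  | Node f => flatten [seq [seq i :: u | u <- leaves (f i)] | i <- ord_enum n]
  end.

(* A tree pair (T+, sigma, T-): leaf number i of T+ (left-to-right, from 0)
   is sent to leaf number (nth 0 sigma i) of T-. *)
Record tpair (n : nat) := TPair { tplus : ntree n; tsig : seq nat; tminus : ntree n }.

Definition nleaves n (P : tpair n) : nat := size (leaves (tplus P)).

Definition tp_wf n (P : tpair n) : Prop :=
  size (leaves (tminus P)) = nleaves P /\ perm_eq (tsig P) (iota 0 (nleaves P)).

Inductive thompson_kind := KF | KT | KV.

Definition in_kind (k : thompson_kind) n (P : tpair n) : Prop :=
  match k with
  | KF => tsig P = iota 0 (nleaves P)
  | KT => exists r, tsig P = rot r (iota 0 (nleaves P))
  | KV => True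
  end.

(* Reduced tree pair: there is no common caret that can be cancelled, i.e. no
   n consecutive leaves u0,...,u(n-1) of T+ (the children of u) sent by sigma,
   in order, to n consecutive leaves v0,...,v(n-1) of T- (the children of v). *)
Definition reduced n (P : tpair n) : Prop :=
  ~ exists (i : nat) (u v : seq 'I_n), forall j : 'I_n,
      [/\ nth [::] (leaves (tplus P)) (i + j) = rcons u j,
          nth 0 (tsig P) (i + j) = nth 0 (tsig P) i + j &
          nth [::] (leaves (tminus P)) (nth 0 (tsig P) i + j) = rcons v j].

Definition iword n := nat -> 'I_n.

Definition prefixb n (u : seq 'I_n) (w : iword n) : bool := mkseq w (size u) == u.

Definition splice n (v u : seq 'I_n) (w : iword n) : iword n :=
  fun m => if m < size v then nth (w m) v m else w (m - size v + size u).

Definition act n (P : tpair n) (w : iword n) : iword n :=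
  let L := leaves (tplus P) in
  let j := find (fun u => prefixb u w) L in
  splice (nth [::] (leaves (tminus P)) (nth 0 (tsig P) j)) (nth [::] L j) w.

Definition represents n (P : tpair n) (f : iword n -> iword n) : Prop :=
  forall w m, act P w m = f w m.

(* (h)_[v]: acts as h on the cone of the word v, and as the identity elsewhere. *)
Definition localize n (v : seq 'I_n) (h : iword n -> iword n) (w : iword n) : iword n :=
  if prefixb v w then splice v [::] (h (fun m => w (m + size v))) else w.

(* Product in the group, with right actions: x (g h) = (x g) h. *)
Definition gmul n (g h : iword n -> iword n) : iword n -> iword n := fun w => h (g w).

(* Main.v *)
Require Import Defs.
From mathcomp Require Import all_boot zify.
From Stdlib Require Import FunctionalExtensionality Classical.
Set Implicit Arguments. Unset Strict Implicit. Unset Printing Implicit Defensive.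

Definition app n (x : seq 'I_n) (t : iword n) : iword n :=
  fun m => if m < size x then nth (t 0) x m else t (m - size x).
Definition shift n (k : nat) (w : iword n) : iword n := fun m => w (m + k).
Definition pre n (x y : seq 'I_n) := exists s, y = x ++ s.
Definition ppre n (x y : seq 'I_n) := exists s, s <> [::] /\ y = x ++ s.
Definition good n (f : iword n -> iword n) (x : seq 'I_n) :=
  exists y, forall t, f (app x t) = app y t.
Definition internal n (T : ntree n) (x : seq 'I_n) := exists2 l, l \in leaves T & ppre x l.

Lemma app_nil n (t : iword n) : app [::] t = t.
Proof. apply: functional_extensionality => m; rewrite /app /= subn0. by []. Qed.

Lemma app_cat n (x y : seq 'I_n) t : app x (app y t) = app (x ++ y) t.
Proof.
apply: functional_extensionality => m; rewrite /app size_cat nth_cat.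
case: ltnP => h1.
  rewrite ltn_addr //. by apply: set_nth_default.
case: ltnP => h2.
  by have -> : (m < size x + size y) = true by lia.
have -> : (m < size x + size y) = false by lia.
by rewrite subnDA.
Qed.

Lemma app_inj n (x : seq 'I_n) t1 t2 : app x t1 = app x t2 -> t1 = t2.
Proof.
move=> e; apply: functional_extensionality => m.
have := congr1 (fun f => f (m + size x)) e; rewrite /app.
by rewrite ltnNge leq_addl /= addnK.
Qed.

Lemma app_nth n (d : 'I_n) (x : seq 'I_n) t m : m < size x -> app x t m = nth d x m.
Proof. by move=> h; rewrite /app h; apply: set_nth_default. Qed.

Lemma app_after n (x : seq 'I_n) t m : app x t (size x + m) = t m.
Proof. by rewrite /app ltnNge leq_addr /= addKn. Qed.

Lemma app_comparable n (a b : seq 'I_n) t1 t2 :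
  app a t1 = app b t2 -> pre a b \/ pre b a.
Proof.
wlog h : a b t1 t2 / size a <= size b.
  move=> W e; case: (leqP (size a) (size b)) => h; first exact: W h e.
  by case: (W b a t2 t1 (ltnW h) (esym e)); [right|left].
move=> e; left; exists (drop (size a) b).
rewrite -{1}(cat_take_drop (size a) b); congr (_ ++ _).
case: a e h => [|a0 a'] e h; first by rewrite take0.
apply: (@eq_from_nth _ a0); first by rewrite size_takel.
move=> m; rewrite size_takel // => hm.
rewrite nth_take //.
have := congr1 (fun f => f m) e.
by rewrite (app_nth a0) ?(app_nth a0) //; apply: leq_trans h.
Qed.

Lemma other n (c : 'I_n) : 2 <= n -> exists c', c' != c.
Proof.
move=> hn.
have h0 : 0 < n by lia.
have h1 : 1 < n by lia.
case: (eqVneq c (Ordinal h0)) => e.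
  by exists (Ordinal h1); rewrite e.
by exists (Ordinal h0); rewrite eq_sym.
Qed.

Lemma app_split n (a b : seq 'I_n) (F : iword n -> iword n) : 2 <= n ->
  (forall t, app a (F t) = app b t) -> exists z, b = a ++ z /\ forall t, F t = app z t.
Proof.
move=> hn e.
have h0 : 0 < n by lia.
pose d := Ordinal h0.
have hab : size a <= size b.
  rewrite leqNgt; apply/negP => hlt.
  have [c' hc'] := other (nth d a (size b)) hn.
  have := congr1 (fun f => f (size b + 0)) (e (fun _ => c')).
  rewrite app_after (app_nth d) ?addn0 // => E.
  by move: hc'; rewrite -E eqxx.
have [z hz] : pre a b.
  case: (app_comparable (e (fun _ => d))) => // -[s hs].
  exists [::]; move: hab; rewrite hs size_cat cats0.
  case: s hs => [|x s] hs /=; first by rewrite cats0.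
  lia.
exists z; split => // t; apply: (@app_inj _ a).
by rewrite app_cat -hz e.
Qed.

Lemma app_uniq n (y1 y2 : seq 'I_n) : 2 <= n ->
  (forall t, app y1 t = app y2 t) -> y1 = y2.
Proof.
move=> hn e.
have [z [hz ez]] := app_split (F := id) hn e.
have h0 : 0 < n by lia.
case: z hz ez => [|c z] hz ez; first by rewrite hz cats0.
have [c' hc'] := other c hn.
have := congr1 (fun f => f 0) (ez (fun _ => c')).
by rewrite /= /app /= => E; move: hc'; rewrite E eqxx.
Qed.

Lemma shift_app n (u : seq 'I_n) t : shift (size u) (app u t) = t.
Proof. apply: functional_extensionality => m; by rewrite /shift addnC app_after. Qed.

Lemma prefixb_app n (u : seq 'I_n) t : prefixb u (app u t).
Proof.
apply/eqP; case: u => [|a u] //.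
apply: (@eq_from_nth _ a); first by rewrite size_mkseq.
move=> m; rewrite size_mkseq => hm.
by rewrite nth_mkseq // (app_nth a).
Qed.

Lemma prefixb_eq n (u : seq 'I_n) w : prefixb u w -> w = app u (shift (size u) w).
Proof.
move/eqP=> e; apply: functional_extensionality => m.
rewrite /app /shift; case: ltnP => h.
  by rewrite -{2}e nth_mkseq.
by rewrite subnK.
Qed.

Lemma prefixbP n (u : seq 'I_n) w : prefixb u w -> exists t, w = app u t.
Proof. by move/prefixb_eq=> ->; eexists. Qed.

Lemma mem_leaves_Node n (f : 'I_n -> ntree n) x :
  (x \in leaves (Node f)) = (if x is a :: u then u \in leaves (f a) else false).
Proof.
apply/flattenP/idP.
  by case=> s /mapP [a _ ->] /mapP [u hu ->].
case: x => // a u hu; exists [seq a :: u | u <- leaves (f a)].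
  by apply: map_f; rewrite mem_ord_enum.
exact: map_f.
Qed.

Lemma leaves_uniq n (T : ntree n) : uniq (leaves T).
Proof.
elim: T => [|f IH] //=.
apply: (@allpairs_uniq_dep _ (fun _ => _) _ (fun i u => i :: u)).
- exact: ord_enum_uniq.
- by move=> a _; apply: IH.
- by move=> [a u] [b v] _ _ /= [-> ->].
Qed.

Lemma leaves_prefree n (T : ntree n) l1 l2 :
  l1 \in leaves T -> l2 \in leaves T -> pre l1 l2 -> l1 = l2.
Proof.
elim: T l1 l2 => [|f IH] l1 l2.
  by rewrite !inE => /eqP -> /eqP ->.
rewrite !mem_leaves_Node; case: l1 => // a u1; case: l2 => // b u2 h1 h2 [s /= [eb e]].
subst b; congr (_ :: _); apply: (IH a) => //; by exists s.
Qed.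

Lemma prefixb_cons n (a : 'I_n) l w :
  prefixb (a :: l) w = (w 0 == a) && prefixb l (shift 1 w).
Proof.
rewrite /prefixb /mkseq /= eqseq_cons; congr (_ && (_ == _)).
rewrite -(addn0 1) iotaDl -map_comp; apply: eq_map => m /=.
by rewrite /shift addnC.
Qed.

Lemma leaves_cover n (T : ntree n) w : exists2 l, l \in leaves T & prefixb l w.
Proof.
elim: T w => [|f IH] w.
  by exists [::]; rewrite ?inE //; apply/eqP.
have [l hl hp] := IH (w 0) (shift 1 w).
exists (w 0 :: l); first by rewrite mem_leaves_Node.
by rewrite prefixb_cons eqxx.
Qed.

Lemma ppre_cons n (a : 'I_n) x y : ppre x y -> ppre (a :: x) (a :: y).
Proof. by case=> s [hs ->]; exists s. Qed.

Lemma leaf_exists n (T : ntree n) : 0 < n -> exists l, l \in leaves T.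
Proof. by move=> h0; have [l hl _] := leaves_cover T (fun _ => Ordinal h0); exists l. Qed.

Lemma trichotomy n (T : ntree n) x : 0 < n ->
  [\/ x \in leaves T, internal T x | exists2 l, l \in leaves T & ppre l x].
Proof.
move=> h0; elim: T x => [|f IH] x.
  case: x => [|a x]; first by apply: Or31; rewrite inE.
  by apply: Or33; exists [::]; rewrite ?inE //; exists (a :: x).
case: x => [|a u].
  apply: Or32; have [l hl] := leaf_exists (Node f) h0; exists l; first exact: hl.
  by case: l hl => [|b l]; rewrite mem_leaves_Node // => _; exists (b :: l).
case: (IH a u) => [h|[l hl hp]|[l hl hp]].
- by apply: Or31; rewrite mem_leaves_Node.
- by apply: Or32; exists (a :: l); rewrite ?mem_leaves_Node //; apply: ppre_cons.
- by apply: Or33; exists (a :: l); rewrite ?mem_leaves_Node //; apply: ppre_cons.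
Qed.

Lemma leaves_Node_split n (f : 'I_n -> ntree n) a :
  exists L1 L2, leaves (Node f) = L1 ++ map (cons a) (leaves (f a)) ++ L2.
Proof.
rewrite /=; case: (splitPr (mem_ord_enum a)) => E1 E2.
rewrite map_cat flatten_cat /=.
by exists (flatten [seq [seq i :: u | u <- leaves (f i)] | i <- E1]), (flatten [seq [seq i :: u | u <- leaves (f i)] | i <- E2]).
Qed.

Lemma nth_nonnil T (s : seq (seq T)) i : nth [::] s i <> [::] -> i < size s.
Proof. by move=> h; rewrite ltnNge; apply/negP => hh; apply: h; rewrite nth_default. Qed.

Lemma rcons_nonnil T (q : seq T) j : rcons q j <> [::].
Proof. by case: q. Qed.

Lemma size_ord_enum n : size (ord_enum n) = n.
Proof. by rewrite -(size_map val) val_ord_enum size_iota. Qed.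

Definition is_leaf n (t : ntree n) := if t is Leaf then true else false.

Lemma deepest n (T : ntree n) x : 0 < n -> internal T x ->
  exists2 q, pre x q & exists k, forall j : 'I_n, nth [::] (leaves T) (k + j) = rcons q j.
Proof.
move=> h0; elim: T x => [|f IH] x.
  by case=> l; rewrite inE => /eqP -> [s [hs e]]; case: x s hs e => [|? ?] [|? ?].
have lift : forall a u, internal (f a) u ->
    exists2 q, pre (a :: u) q & exists k, forall j : 'I_n, nth [::] (leaves (Node f)) (k + j) = rcons q j.
  move=> a u hu; have [q [s hs] [k hk]] := IH a u hu.
  have [L1 [L2 e]] := leaves_Node_split f a.
  exists (a :: q); first by exists s; rewrite hs.
  exists (size L1 + k) => j; rewrite e -addnA nth_cat ltnNge leq_addr /= addKn.
  have hkj : k + j < size (leaves (f a)) by apply: nth_nonnil; rewrite hk; apply: rcons_nonnil.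
  by rewrite nth_cat size_map hkj (nth_map [::]) // hk.
case: x => [|a u] hx; last first.
  apply: lift; case: hx => l; rewrite mem_leaves_Node; case: l => // b l hl [s [hs [eb el]]].
  by subst b; exists l => //; exists s.
case: (boolP [exists a, ~~ is_leaf (f a)]).
  case/existsP => a; case E: (f a) => [|g] // _.
  have hi : internal (f a) [::].
    rewrite E; have [l hl] := leaf_exists (Node g) h0; exists l; first exact: hl.
    by case: l hl => [|b l]; rewrite mem_leaves_Node // => _; exists (b :: l).
  have [q hq hk] := lift a [::] hi.
  by exists q; [exists q | exact: hk].
rewrite negb_exists => /forallP hall.
exists [::]; first by exists [::].
have e : leaves (Node f) = [seq [:: i] | i <- ord_enum n].
  rewrite /=; have -> : [seq [seq i :: u | u <- leaves (f i)] | i <- ord_enum n] = [seq [:: [:: i]] | i <- ord_enum n].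
    by apply: eq_map => a; move: (hall a); case: (f a).
  by elim: (ord_enum n) => //= a s ->.
exists 0 => j; rewrite e add0n (nth_map j); last by rewrite size_ord_enum.
congr [:: _]; apply: val_inj => /=.
have := congr1 (fun s => nth 0 s j) (val_ord_enum n).
by rewrite (nth_map j) ?size_ord_enum // nth_iota.
Qed.

Lemma prefixb_comparable n (a b : seq 'I_n) w :
  prefixb a w -> prefixb b w -> pre a b \/ pre b a.
Proof.
move=> /prefixb_eq ha /prefixb_eq hb; apply: (@app_comparable _ _ _ (shift (size a) w) (shift (size b) w)).
by rewrite -ha -hb.
Qed.

Lemma leaves_prefixb_eq n (T : ntree n) a b w : a \in leaves T -> b \in leaves T ->
  prefixb a w -> prefixb b w -> a = b.
Proof.
move=> ha hb pa pb; case: (prefixb_comparable pa pb) => h.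
  exact: (leaves_prefree ha hb h).
exact/esym/(leaves_prefree hb ha h).
Qed.

Lemma splice_app n (v l : seq 'I_n) t : splice v l (app l t) = app v t.
Proof.
apply: functional_extensionality => m; rewrite /splice /app; case: ltnP => h.
  by apply: set_nth_default.
by rewrite ltnNge leq_addl /= addnK.
Qed.

Lemma act_leaf n (P : tpair n) j t : j < size (leaves (tplus P)) ->
  act P (app (nth [::] (leaves (tplus P)) j) t) =
  app (nth [::] (leaves (tminus P)) (nth 0 (tsig P) j)) t.
Proof.
move=> hj; rewrite /act.
set L := leaves (tplus P); set w := app (nth [::] L j) t.
have hw : prefixb (nth [::] L j) w by apply: prefixb_app.
have hhas : has (fun u => prefixb u w) L by apply/hasP; exists (nth [::] L j); rewrite ?mem_nth.
have hk : find (fun u => prefixb u w) L < size L by rewrite -has_find.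
have hf := nth_find [::] hhas.
have e : nth [::] L (find (fun u => prefixb u w) L) = nth [::] L j.
  by apply: (leaves_prefixb_eq (T := tplus P)) hf hw; apply: mem_nth.
have ek : find (fun u => prefixb u w) L = j.
  by apply/eqP; rewrite -(nth_uniq [::] hk hj (leaves_uniq _)) e.
by rewrite ek splice_app.
Qed.

Lemma app_rcons n (u : seq 'I_n) a t : app (rcons u a) t = app u (app [:: a] t).
Proof. by rewrite app_cat cats1. Qed.

Lemma app_head n (t : iword n) : app [:: t 0] (shift 1 t) = t.
Proof.
apply: functional_extensionality => -[|m] //=.
by rewrite /app /= /shift subn1 /= addn1.
Qed.

Lemma good_ext n (f : iword n -> iword n) x q : good f x -> pre x q -> good f q.
Proof.
move=> [y hy] [s ->]; exists (y ++ s) => t.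
by rewrite -app_cat hy app_cat.
Qed.

Lemma leaf_good n (P : tpair n) l : l \in leaves (tplus P) -> good (act P) l.
Proof.
move=> hl; have hi : index l (leaves (tplus P)) < size (leaves (tplus P)) by rewrite index_mem.
eexists => t; rewrite -{1}(nth_index [::] hl) act_leaf //.
Qed.

Lemma no_good_reduced n (P : tpair n) : 0 < n ->
  (forall x, internal (tplus P) x -> ~ good (act P) x) -> reduced P.
Proof.
move=> h0 H [i [u [v hj]]].
apply: (H u).
  have [e1 _ _] := hj (Ordinal h0).
  exists (rcons u (Ordinal h0)).
    rewrite -e1 mem_nth //; apply: nth_nonnil; rewrite e1; exact: rcons_nonnil.
  by exists [:: Ordinal h0]; split => //; rewrite cats1.
exists v => t; have [e1 e2 e3] := hj (t 0).
have hs : i + t 0 < size (leaves (tplus P)).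
  apply: nth_nonnil; rewrite e1; exact: rcons_nonnil.
have -> : app u t = app (nth [::] (leaves (tplus P)) (i + t 0)) (shift 1 t).
  by rewrite e1 app_rcons app_head.
by rewrite act_leaf // e2 e3 app_rcons app_head.
Qed.

Lemma reduced_no_good n (P : tpair n) x : 2 <= n -> reduced P ->
  internal (tplus P) x -> ~ good (act P) x.
Proof.
move=> hn hred hx hg.
have h0 : 0 < n by lia.
set Lp := leaves (tplus P); set Lm := leaves (tminus P); set s := nth 0 (tsig P).
have [q hq [k hk]] := deepest h0 hx.
have [y hy] := good_ext hg hq.
have hkj : forall j : 'I_n, k + j < size Lp.
  by move=> j; apply: nth_nonnil; rewrite hk; exact: rcons_nonnil.
have himg : forall j : 'I_n, nth [::] Lm (s (k + j)) = rcons y j.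
  move=> j; apply: app_uniq => // t.
  by rewrite -act_leaf // hk app_rcons hy app_rcons.
have hsz : forall j : 'I_n, s (k + j) < size Lm.
  by move=> j; apply: nth_nonnil; rewrite himg; exact: rcons_nonnil.
have hy_int : internal (tminus P) y.
  exists (rcons y (Ordinal h0)).
    by rewrite -himg mem_nth.
  by exists [:: Ordinal h0]; split => //; rewrite cats1.
have [q2 [r hr] [k2 hk2]] := deepest h0 hy_int.
have hk2s : forall j : 'I_n, k2 + j < size Lm.
  by move=> j; apply: nth_nonnil; rewrite hk2; exact: rcons_nonnil.
have eq2 : q2 = y.
  case: r hr => [|c r] hr; first by rewrite hr cats0.
  have m1 : rcons y c \in Lm by rewrite -himg mem_nth.
  have m2 : rcons q2 (Ordinal h0) \in Lm by rewrite -hk2 mem_nth.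
  have := leaves_prefree m1 m2.
  have hp : pre (rcons y c) (rcons q2 (Ordinal h0)).
    by exists (rcons r (Ordinal h0)); rewrite hr -!cats1 -!catA.
  move=> /(_ hp) /(congr1 size); rewrite !size_rcons hr size_cat /=; lia.
rewrite eq2 in hk2.
have es : forall j : 'I_n, s (k + j) = k2 + j.
  move=> j; apply/eqP; rewrite -(nth_uniq [::] (hsz j) (hk2s j) (leaves_uniq _)).
  by rewrite himg /Lm hk2.
have e0 := es (Ordinal h0); rewrite /= addn0 in e0.
apply hred; exists k, q, y => j; split.
- exact: hk.
- by move: (es j) e0; rewrite /s => -> ->; rewrite addn0.
- by move: e0 (hk2 j); rewrite /s addn0 => ->.
Qed.

Lemma same_size n (P1 P2 : tpair n) : 0 < n -> act P1 = act P2 ->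
  (forall x, internal (tplus P1) x -> ~ good (act P1) x) ->
  (forall x, internal (tplus P2) x -> ~ good (act P2) x) ->
  nleaves P1 = nleaves P2.
Proof.
move=> h0 e H1 H2.
have sub : forall (Q1 Q2 : tpair n), act Q1 = act Q2 ->
    (forall x, internal (tplus Q1) x -> ~ good (act Q1) x) ->
    (forall x, internal (tplus Q2) x -> ~ good (act Q2) x) ->
    {subset leaves (tplus Q1) <= leaves (tplus Q2)}.
  move=> Q1 Q2 eQ G1 G2 x hx.
  case: (trichotomy (tplus Q2) x h0) => // [hi|[l hl hp]].
    by case: (G2 x hi); rewrite -eQ; apply: leaf_good.
  case: (G1 l); first by exists x.
  by rewrite eQ; apply: leaf_good.
apply: perm_size; apply: uniq_perm; rewrite ?leaves_uniq // => x.
apply/idP/idP; [exact: sub | exact: sub].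
Qed.

Fixpoint graft n (T : ntree n) (u : seq 'I_n) (S : ntree n) : ntree n :=
  match u with
  | [::] => S
  | a :: u' => match T with
               | Leaf => Leaf
               | Node f => Node (fun i => if i == a then graft (f i) u' S else f i)
               end
  end.

Lemma flatten_map_flatten (A B : Type) (F : A -> seq B) (X : seq (seq A)) :
  flatten (map F (flatten X)) = flatten (map (fun x => flatten (map F x)) X).
Proof. by elim: X => //= x X IH; rewrite map_cat flatten_cat IH. Qed.

Lemma leaves_graft n (T : ntree n) u S : u \in leaves T ->
  leaves (graft T u S) =
  flatten [seq (if l == u then map (cat u) (leaves S) else [:: l]) | l <- leaves T].
Proof.
elim: T u => [|f IH] u.
  by rewrite inE => /eqP -> /=; rewrite cats0 map_id.
case: u => [|a u']; first by rewrite mem_leaves_Node.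
rewrite mem_leaves_Node => hu.
rewrite [leaves (Node f)]/= flatten_map_flatten /= -map_comp.
congr flatten; apply: eq_map => i /=.
case: eqP => [->|ne].
  rewrite IH // map_flatten /= -map_comp -[in RHS]map_comp.
  congr flatten; apply: eq_map => w /=.
  rewrite eqseq_cons eqxx /=; case: ifP => _ //.
  by rewrite -map_comp.
rewrite -[LHS]flatten_seq1 -map_comp -[in RHS]map_comp; congr flatten; apply: eq_map => w /=.
by rewrite eqseq_cons; case: eqP.
Qed.

Lemma leaves_graft_nth n (T : ntree n) i S : i < size (leaves T) ->
  leaves (graft T (nth [::] (leaves T) i) S) =
  take i (leaves T) ++ map (cat (nth [::] (leaves T) i)) (leaves S) ++ drop i.+1 (leaves T).
Proof.
move=> hi; set L := leaves T; set u := nth [::] L i.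
rewrite leaves_graft ?mem_nth //.
have hU := leaves_uniq T; rewrite -/L in hU.
have eL : L = take i L ++ u :: drop i.+1 L by rewrite -drop_nth // cat_take_drop.
move: hU; rewrite {1}eL cat_uniq /= negb_or => /and3P [_ /andP [h1 _] /andP [h2 _]].
rewrite -/L {1}eL map_cat flatten_cat /= eqxx.
have E : forall s : seq (seq 'I_n), u \notin s ->
    flatten [seq (if l == u then map (cat u) (leaves S) else [:: l]) | l <- s] = s.
  move=> s hs; rewrite -[RHS]flatten_seq1; congr flatten.
  apply/eq_in_map => l hl /=.
  by case: eqVneq => // e; move: hs; rewrite -e hl.
by rewrite !E.
Qed.

Lemma nth_tmd T (L M : seq (seq T)) i x : i < size L ->
  nth [::] (take i L ++ M ++ drop i.+1 L) x =
  if x < i then nth [::] L x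
  else if x < i + size M then nth [::] M (x - i)
  else nth [::] L (x - size M + 1).
Proof.
move=> hi; rewrite nth_cat size_take hi; case: ltnP => h1.
  by rewrite nth_take.
rewrite nth_cat; have -> : (x - i < size M) = (x < i + size M) by lia.
case: ltnP => h2 //.
rewrite nth_drop; congr nth; lia.
Qed.

Lemma size_tmd T (L M : seq T) i : i < size L ->
  size (take i L ++ M ++ drop i.+1 L) = size L + size M - 1.
Proof. by move=> hi; rewrite !size_cat size_take hi size_drop; lia. Qed.

Lemma cat_split_le T (x s u p : seq T) : x ++ s = u ++ p -> size u <= size x ->
  exists p', x = u ++ p' /\ p = p' ++ s.
Proof.
move=> e h; exists (drop (size u) x).
have hx : take (size u) x = u.
  have := congr1 (take (size u)) e.
  by rewrite takel_cat // take_size_cat.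
split; first by rewrite -{1}(cat_take_drop (size u) x) hx.
have E1 : drop (size u) (x ++ s) = drop (size u) x ++ s.
  rewrite drop_cat; case: ltnP => h2 //.
  have -> : size u = size x by lia.
  by rewrite drop_size subnn drop0.
by rewrite -E1 e drop_size_cat.
Qed.

Lemma localize_app n (v : seq 'I_n) f t : localize v f (app v t) = app v (f t).
Proof.
rewrite /localize prefixb_app.
have -> : (fun m => app v t (m + size v)) = t.
  by apply: functional_extensionality => m; rewrite addnC app_after.
apply: functional_extensionality => m; rewrite /splice /app /= addn0.
by case: ifP => // h; apply: set_nth_default.
Qed.

Lemma localize_not n (v : seq 'I_n) f w : ~~ prefixb v w -> localize v f w = w.
Proof. by rewrite /localize => /negbTE ->. Qed.


Definition adj (si m y : nat) := if y < si then y else y + m - 1.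
Definition sigf (s : nat -> nat) i m x :=
  if x < i then adj (s i) m (s x)
  else if x < i + m then s i + (x - i) else adj (s i) m (s (x - m + 1)).
Definition newsig (sg : seq nat) i m N := mkseq (sigf (nth 0 sg) i m) (N + m - 1).

Ltac splitifs := repeat match goal with
 | |- context [if ?b then _ else _] =>
     lazymatch b with context [if _ then _ else _] => fail | _ => case: (boolP b) => ? /= end
 end.


Lemma nth_rot_iota N r x : r < N -> x < N ->
  nth 0 (rot r (iota 0 N)) x = if x < N - r then x + r else x + r - N.
Proof.
move=> hr hx; rewrite /rot nth_cat size_drop size_iota; case: ltnP => h.
  by rewrite nth_drop nth_iota ?add0n; lia.
by rewrite nth_take ?nth_iota; lia.
Qed.

Lemma perm_iota_facts (sg : seq nat) N : perm_eq sg (iota 0 N) ->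
  [/\ size sg = N, uniq sg,
      forall y, y < N -> nth 0 sg y < N &
      forall a b, a < N -> b < N -> nth 0 sg a = nth 0 sg b -> a = b].
Proof.
move=> hp.
have sz : size sg = N by rewrite (perm_size hp) size_iota.
have us : uniq sg by rewrite (perm_uniq hp) iota_uniq.
split => //.
  move=> y hy; have : nth 0 sg y \in sg by rewrite mem_nth ?sz.
  by rewrite (perm_mem hp) mem_iota.
move=> a b ha hb e; apply/eqP; rewrite -(nth_uniq 0 _ _ us) ?sz //; exact/eqP.
Qed.

Lemma newsig_perm sg N i m : perm_eq sg (iota 0 N) -> i < N -> 0 < m ->
  perm_eq (newsig sg i m N) (iota 0 (N + m - 1)).
Proof.
move=> hp hi hm; have [sz us rng inj] := perm_iota_facts hp.
set s := nth 0 sg in rng inj.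
have hsi := rng i hi.
have U : uniq (newsig sg i m N).
  rewrite /newsig /mkseq map_inj_in_uniq ?iota_uniq // => x y; rewrite !mem_iota /= => hx hy.
  rewrite /sigf /adj -/s.
  have ne : forall a, a < N -> a <> i -> s a <> s i by move=> a ha ne e; apply: ne; apply: inj.
  case: (ltnP x i) => h1; case: (ltnP y i) => h2.
  - have := inj x y; have := rng x; have := rng y; splitifs; lia.
  - case: (ltnP y (i + m)) => h3.
    + have := ne x; have := rng x; splitifs; lia.
    + have := inj x (y - m + 1); have := ne x; have := ne (y - m + 1); have := rng x; have := rng (y - m + 1); splitifs; lia.
  - case: (ltnP x (i + m)) => h3.
    + have := ne y; have := rng y; splitifs; lia.
    + have := inj y (x - m + 1); have := ne y; have := ne (x - m + 1); have := rng y; have := rng (x - m + 1); splitifs; lia.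
  - case: (ltnP x (i + m)) => h3; case: (ltnP y (i + m)) => h4.
    + splitifs; lia.
    + have := ne (y - m + 1); have := rng (y - m + 1); splitifs; lia.
    + have := ne (x - m + 1); have := rng (x - m + 1); splitifs; lia.
    + have := inj (x - m + 1) (y - m + 1); have := ne (y - m + 1); have := ne (x - m + 1); have := rng (x - m + 1); have := rng (y - m + 1); splitifs; lia.
apply: uniq_perm => //; first exact: iota_uniq.
have sub : {subset newsig sg i m N <= iota 0 (N + m - 1)}.
  move=> z /mapP [x]; rewrite mem_iota /= add0n => hx ->; rewrite mem_iota /= add0n.
  rewrite /sigf /adj -/s.
  case: (ltnP x i) => h1; last case: (ltnP x (i + m)) => h2.
  - have := rng x; splitifs; lia.
  - splitifs; lia.
  - have := rng (x - m + 1); splitifs; lia.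
have hsz : size (iota 0 (N + m - 1)) <= size (newsig sg i m N) by rewrite size_mkseq size_iota.
by have [_ E] := uniq_min_size U sub hsz.
Qed.

Lemma newsig_iota N i m : i < N -> 0 < m ->
  newsig (iota 0 N) i m N = iota 0 (N + m - 1).
Proof.
move=> hi hm; apply: (@eq_from_nth _ 0); first by rewrite size_mkseq size_iota.
move=> x; rewrite size_mkseq => hx; rewrite nth_mkseq // nth_iota // /sigf /adj.
case: (ltnP x i) => h1; last case: (ltnP x (i + m)) => h2.
- rewrite !nth_iota; try lia. splitifs; lia.
- rewrite !nth_iota; try lia.
- rewrite !nth_iota; try lia. splitifs; lia.
Qed.

Lemma newsig_rot N i m r : i < N -> 0 < m ->
  exists r', newsig (rot r (iota 0 N)) i m N = rot r' (iota 0 (N + m - 1)).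
Proof.
move=> hi hm; case: (leqP N r) => hr.
  by exists 0; rewrite rot_oversize ?size_iota // newsig_iota // rot0.
exists (if i < N - r then r else r + m - 1).
apply: (@eq_from_nth _ 0); first by rewrite size_mkseq size_rot size_iota.
move=> x; rewrite size_mkseq => hx; rewrite nth_mkseq // nth_rot_iota //; last by splitifs; lia.
rewrite /sigf /adj.
case: (ltnP x i) => h1; last case: (ltnP x (i + m)) => h2.
- rewrite !nth_rot_iota; try lia. splitifs; lia.
- rewrite !nth_rot_iota; try lia. splitifs; lia.
- rewrite !nth_rot_iota; try lia. splitifs; lia.
Qed.

Lemma nth_map' (A B : Type) (d : B) (d' : A) (f : A -> B) s i : i < size s ->
  nth d (map f s) i = f (nth d' s i).
Proof. by move=> h; rewrite (set_nth_default (f d')) ?size_map // (nth_map d'). Qed.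

Lemma construct n (k : thompson_kind) (P H : tpair n) (i : nat) :
  2 <= n ->
  tp_wf P -> in_kind k P -> reduced P ->
  tp_wf H -> in_kind KF H -> reduced H ->
  i < nleaves P ->
  let v := nth [::] (leaves (tminus P)) (nth 0 (tsig P) i) in
  let gh' := gmul (act P) (localize v (act H)) in
  exists R0 : tpair n, [/\ tp_wf R0, in_kind k R0, act R0 = gh',
     (forall x, internal (tplus R0) x -> ~ good (act R0) x) &
     nleaves R0 = nleaves P + nleaves H - 1].
Proof.
move=> hn [wfPs wfPp] kP redP [wfHs wfHp] kH redH hi v gh'.
have h0 : 0 < n by lia.
have [szs us rng inj] := perm_iota_facts wfPp.
rewrite /nleaves in hi wfPs wfHs szs rng inj wfPp kH *.
set Lp := leaves (tplus P) in hi wfPs szs rng inj wfPp kP *.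
set Lm := leaves (tminus P) in v wfPs gh' *.
set LHp := leaves (tplus H) in wfHs wfHp kH *.
set LHm := leaves (tminus H) in wfHs *.
set s := nth 0 (tsig P) in v rng inj gh' *.
set u := nth [::] Lp i.
set N := size Lp in hi wfPs szs rng inj wfPp kP *.
set m := size LHp in wfHs wfHp kH *.
have hm : 0 < m.
  have [l hl] := leaf_exists (tplus H) h0.
  by rewrite lt0n size_eq0; apply/eqP => e; move: hl; rewrite -/LHp e.
have hsi : s i < N := rng i hi.
have hsiLm : s i < size Lm by rewrite wfPs.
have uLp : u \in Lp by rewrite mem_nth.
have vLm : v \in Lm by rewrite mem_nth.
have gP : forall x t, x < N -> act P (app (nth [::] Lp x) t) = app (nth [::] Lm (s x)) t.
  by move=> x t hx; rewrite act_leaf.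
have notv : forall x t, x < N -> x <> i -> ~~ prefixb v (app (nth [::] Lm (s x)) t).
  move=> x t hx ne; apply/negP => hp.
  have e : v = nth [::] Lm (s x).
    apply: (leaves_prefixb_eq (T := tminus P)) hp (prefixb_app _ _) => //.
    by rewrite mem_nth // wfPs rng.
  apply: ne; apply: inj => //; apply/eqP.
  by rewrite -(nth_uniq [::] _ _ (leaves_uniq (tminus P))) ?wfPs ?rng // -/Lm -e.
have ghO : forall x t, x < N -> x <> i -> gh' (app (nth [::] Lp x) t) = app (nth [::] Lm (s x)) t.
  by move=> x t hx ne; rewrite /gh' /gmul gP // localize_not //; apply: notv.
have ghU : forall t, gh' (app u t) = app v (act H t).
  by move=> t; rewrite /gh' /gmul gP // localize_app.
have aH : forall k t, k < m -> act H (app (nth [::] LHp k) t) = app (nth [::] LHm k) t.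
  by move=> k' t hk; rewrite act_leaf // kH nth_iota.
pose R0 := TPair (graft (tplus P) u (tplus H)) (newsig (tsig P) i m N) (graft (tminus P) v (tminus H)).
have eL0p : leaves (tplus R0) = take i Lp ++ map (cat u) LHp ++ drop i.+1 Lp.
  by rewrite /= /u /Lp leaves_graft_nth.
have eL0m : leaves (tminus R0) = take (s i) Lm ++ map (cat v) LHm ++ drop (s i).+1 Lm.
  by rewrite /= /v /Lm leaves_graft_nth.
have sz0p : size (leaves (tplus R0)) = N + m - 1 by rewrite eL0p size_tmd // size_map.
have sz0m : size (leaves (tminus R0)) = N + m - 1 by rewrite eL0m size_tmd // size_map wfHs wfPs.
have nL0m_adj : forall y, y < N -> y <> s i -> nth [::] (leaves (tminus R0)) (adj (s i) m y) = nth [::] Lm y.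
  move=> y hy ne; rewrite eL0m nth_tmd // size_map wfHs /adj.
  splitifs; first [by congr nth; lia | exfalso; lia | done].
have nL0m_blk : forall k', k' < m -> nth [::] (leaves (tminus R0)) (s i + k') = v ++ nth [::] LHm k'.
  move=> k' hk; rewrite eL0m nth_tmd // size_map wfHs.
  rewrite ltnNge leq_addr /= ltn_add2l hk (nth_map [::]) ?wfHs ?addKn //.
have eact : act R0 = gh'.
  apply: functional_extensionality => w.
  have [l' hl' hp] := leaves_cover (tplus R0) w.
  have hx : index l' (leaves (tplus R0)) < N + m - 1 by rewrite -sz0p index_mem.
  have el := nth_index [::] hl'.
  have ew := prefixb_eq hp.
  set t := shift (size l') w in ew.
  rewrite ew -el.
  set x' := index l' _ in hx el *.
  rewrite act_leaf ?sz0p // [tsig R0]/= nth_mkseq //.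
  rewrite eL0p nth_tmd // size_map /sigf.
  have ne_s : forall x, x < N -> x <> i -> s x <> s i by move=> x hx0 ne e; apply: ne; apply: inj.
  case: (ltnP x' i) => h1; last case: (ltnP x' (i + m)) => h2.
  + rewrite nL0m_adj ?ghO //; first [lia | (apply: rng; lia) | (apply: (ne_s x'); lia)].
  + rewrite (nth_map' [::] [::]); last lia.
    rewrite -app_cat ghU aH; last lia.
    rewrite app_cat nL0m_blk //; lia.
  + rewrite nL0m_adj ?ghO //; first [lia | (apply: rng; lia) | (apply: (ne_s (x' - m + 1)); lia)].
exists R0; split.
- split; first by rewrite sz0m.
  by rewrite /nleaves sz0p; apply: newsig_perm.
- case: k kP => kP; rewrite /in_kind /nleaves ?sz0p //=.
  + by rewrite kP newsig_iota.
  + by case: kP => r ->; apply: newsig_rot.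
- exact: eact.
- rewrite eact.
  have [uT uD] : u \notin take i Lp /\ u \notin drop i.+1 Lp.
    have hU := leaves_uniq (tplus P); rewrite -/Lp in hU.
    have eL : Lp = take i Lp ++ u :: drop i.+1 Lp by rewrite -drop_nth // cat_take_drop.
    by move: hU; rewrite {1}eL cat_uniq /= negb_or => /and3P [_ /andP [h1 _] /andP [h2 _]].
  have caseI : forall p', internal (tplus H) p' -> ~ good gh' (u ++ p').
    move=> p' hp' [y hy]; apply: (reduced_no_good hn redH hp').
    have E : forall t, app v (act H (app p' t)) = app y t by move=> t; rewrite -ghU app_cat hy.
    have [z [_ hz]] := app_split hn E.
    by exists z.
  have caseII : forall x, ppre x u -> ~ good gh' x.
    move=> x [q [hq eu]] [y hy].
    have E : forall t, app v (act H t) = app (y ++ q) t by move=> t; rewrite -ghU eu -app_cat hy app_cat.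
    have [z [_ hz]] := app_split hn E.
    case EH: (tplus H) => [|g].
    + have m1 : m = 1 by rewrite /m /LHp EH.
      have lm0 : nth [::] LHm 0 = [::].
        case El: (nth [::] LHm 0) => [|c r] //.
        have [c' hc'] := other c hn.
        have [l2 hl2 hp2] := leaves_cover (tminus H) (fun _ => c').
        have hidx : index l2 (leaves (tminus H)) < 1 by rewrite -m1 -wfHs index_mem.
        have : l2 = c :: r.
          by rewrite -El -(nth_index [::] hl2); congr nth; lia.
        move=> e2; move: hp2; rewrite e2 prefixb_cons => /andP [/eqP e3 _].
        by move: hc'; rewrite e3 eqxx.
      have idH : forall t, act H t = t.
        by move=> t; have := aH 0 t; rewrite m1 lm0 /LHp EH /= !app_nil; apply.
      have locid : forall w, localize v (act H) w = w.
        move=> w; case: (boolP (prefixb v w)) => hpw; last by rewrite localize_not.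
        by rewrite (prefixb_eq hpw) localize_app idH.
      apply: (reduced_no_good hn redP (x := x)).
        by exists u => //; exists q.
      by exists y => t; rewrite -hy /gh' /gmul locid.
    + apply: (reduced_no_good hn redH (x := [::])).
        rewrite EH; have [l hl] := leaf_exists (Node g) h0; exists l => //.
        by case: l hl => [|b l]; rewrite mem_leaves_Node // => _; exists (b :: l).
      by exists z => t; rewrite app_nil hz.
  have caseIII : forall x l', l' \in Lp -> l' <> u -> ppre x l' -> ~ pre x u -> ~ good gh' x.
    move=> x l' hl' ne hp npre [y hy].
    apply: (reduced_no_good hn redP (x := x)); first by exists l'.
    exists y => t; rewrite -hy.
    have [l2 hl2 hp2] := leaves_cover (tplus P) (app x t).
    have ne2 : l2 <> u.
      move=> e; rewrite e in hp2.
      case: (prefixb_comparable hp2 (prefixb_app x t)) => // -[r1 e1].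
      case: hp => r2 [_ e2]; apply: ne; apply/esym.
      by apply: (leaves_prefree uLp hl'); exists (r1 ++ r2); rewrite e2 e1 catA.
    have hx2 : index l2 Lp < N by rewrite index_mem.
    have nx2 : index l2 Lp <> i by move=> e; apply: ne2; rewrite -(nth_index [::] hl2) e.
    by rewrite (prefixb_eq hp2) -(nth_index [::] hl2) ghO // gP.
  move=> x [l' hl' hpp]; have [sfx [hsfx el']] := hpp.
  move: hl'; rewrite eL0p !mem_cat => /or3P [h|h|h].
  + have hl : l' \in Lp by apply: mem_take h.
    have ne : l' <> u by move=> e; move: uT; rewrite -e h.
    case: (classic (pre x u)) => [[q eq]|npre]; last exact: (caseIII x l' hl ne hpp npre).
    case: q eq => [|c q] eq.
      rewrite cats0 in eq; subst x; case: ne; apply/esym.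
      by apply: (leaves_prefree uLp hl); exists sfx.
    by apply: caseII; exists (c :: q).
  + case/mapP: h => p hp ep.
    case: (leqP (size u) (size x)) => hs.
      have [p' [e1 e2]] := cat_split_le (etrans (esym el') ep) hs.
      rewrite e1; apply: caseI; exists p => //; exists sfx; split => //.
    have [q [e1 e2]] := cat_split_le (etrans (esym ep) el') (ltnW hs).
    apply: caseII; exists q; split => //.
    by move=> q0; move: hs; rewrite e1 q0 cats0 ltnn.
  + have hl : l' \in Lp by apply: mem_drop h.
    have ne : l' <> u by move=> e; move: uD; rewrite -e h.
    case: (classic (pre x u)) => [[q eq]|npre]; last exact: (caseIII x l' hl ne hpp npre).
    case: q eq => [|c q] eq.
      rewrite cats0 in eq; subst x; case: ne; apply/esym.
      by apply: (leaves_prefree uLp hl); exists sfx.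
    by apply: caseII; exists (c :: q).
- by rewrite /nleaves sz0p.
Qed.

Theorem lemma3p8 (n : nat) (k : thompson_kind) (P H : tpair n) (i : nat) :
  2 <= n ->
  tp_wf P -> in_kind k P -> reduced P ->
  tp_wf H -> in_kind KF H -> reduced H ->
  i < nleaves P ->
  let v := nth [::] (leaves (tminus P)) (nth 0 (tsig P) i) in
  let gh' := gmul (act P) (localize v (act H)) in
  (exists R : tpair n, [/\ tp_wf R, in_kind k R, reduced R & represents R gh']) /\
  (forall R : tpair n, tp_wf R -> reduced R -> represents R gh' ->
     nleaves R = nleaves P + nleaves H - 1).
Proof.
move=> hn wfP kP redP wfH kH redH hi v gh'.
have h0 : 0 < n by lia.
have [R0 [wf0 k0 e0 ng0 sz0]] := construct hn wfP kP redP wfH kH redH hi.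
split.
  exists R0; split => //; first exact: no_good_reduced.
  by move=> w m; rewrite e0.
move=> R _ redR rep.
have eR : act R = gh'.
  by apply: functional_extensionality => w; apply: functional_extensionality => m; apply: rep.
rewrite -sz0; apply: same_size => //; first by rewrite eR e0.
by move=> x hx; apply: reduced_no_good.
Qed.
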